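(* Let $A$ be an $n\times n$ real matrix whose eigenvalues are distinct, and let $p\geq 1$ be an integer. Then the following are equivalent: (i) there exists a vector $B_v\in\mathbb{R}^n$ with at most $k$ nonzero entries such that the system $\frac{dx(t)}{dt}=Ax(t)+B_v u(t)$ is controllable; (ii) there exists a real $n\times p$ matrix $B_f$ with at most $k$ nonzero entries such that the system $\frac{dx(t)}{dt}=Ax(t)+B_f u(t)$ is controllable.
   Context: Controllability refers to the usual notion for continuous-time linear time-invariant systems $\frac{dx}{dt}=Ax+Bu$ (controllability of the pair $(A,B)$). A vector or matrix is called $k$-sparse if it has at most $k$ nonzero entries; the paper phrases (i) as ''the system $\Sigma_v$ is $k$-sparse controllable'' and (ii) as ''the system $\Sigma_f$ is $k$-sparse controllable''. *)

(* Defs.v *)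
From HB Require Import structures.
From mathcomp Require Import all_boot all_order all_algebra.
From mathcomp Require Import reals.
From mathcomp.real_closed Require Import complex.
Set Implicit Arguments. Unset Strict Implicit. Unset Printing Implicit Defensive.
Import Order.TTheory GRing.Theory Num.Theory.
Local Open Scope ring_scope.

Definition ctrb_mx (R : realType) (n m : nat) (A : 'M[R]_n) (B : 'M[R]_(n, m)) :=
  \mxrow_(i < n) (A ^+ i *m B).

(* The LTI system dx/dt = A x + B u is controllable (Kalman rank criterion). *)
Definition controllable (R : realType) (n m : nat) (A : 'M[R]_n) (B : 'M[R]_(n, m)) : Prop :=
  \rank (ctrb_mx A B) = n.

Definition nnz (R : realType) (n m : nat) (B : 'M[R]_(n, m)) : nat :=
  #|[set ij : 'I_n * 'I_m | B ij.1 ij.2 != 0]|.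

Definition sparse (R : realType) (k n m : nat) (B : 'M[R]_(n, m)) : Prop :=
  (nnz B <= k)%N.

Definition complexify (R : realType) (n : nat) (A : 'M[R]_n) : 'M[R[i]]_n :=
  map_mx (fun x : R => Complex x 0) A.

Definition distinct_eigenvalues (R : realType) (n : nat) (A : 'M[R]_n) : Prop :=
  forall z : R[i], (mup z (char_poly (complexify A)) <= 1)%N.

(* Main.v *)
Require Import Defs.
From mathcomp Require Import all_boot all_order all_algebra.
From mathcomp Require Import reals.
From mathcomp.real_closed Require Import complex.
Set Implicit Arguments. Unset Strict Implicit. Unset Printing Implicit Defensive.
Import Order.TTheory GRing.Theory Num.Theory.
Local Open Scope ring_scope.

Section Gen.
Variable F : fieldType.

Definition ctrbF n m (A : 'M[F]_n) (B : 'M[F]_(n, m)) :=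
  \mxrow_(i < n) (A ^+ i *m B).

Definition kry n (A : 'M[F]_n) (b : 'cV[F]_n) : 'M[F]_n :=
  \matrix_(r, i < n) (A ^+ i *m b) r 0.

Lemma ctrb_kry n (A : 'M[F]_n) (b : 'cV[F]_n) :
  ctrbF A b *m \mxcol_(i < n) (delta_mx 0 i : 'M[F]_(1, n)) = kry A b.
Proof.
rewrite /ctrbF mul_mxrow_mxcol; apply/matrixP => r c.
rewrite summxE !mxE (bigD1 c) //= big1 ?addr0.
  by rewrite !mxE big_ord1 !mxE !eqxx mulr1.
move=> i /negPf ic; rewrite !mxE big_ord1 !mxE [c == i]eq_sym ic.
by rewrite andbF mulr0.
Qed.

Lemma kry_ctrb n (A : 'M[F]_n) (b : 'cV[F]_n) :
  kry A b *m \mxrow_(i < n) (delta_mx i 0 : 'M[F]_(n, 1)) = ctrbF A b.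
Proof.
rewrite mul_mxrow /ctrbF; apply: eq_mxrow => i; apply/matrixP => r k.
rewrite !mxE (bigD1 i) //= big1 ?addr0.
  by rewrite !mxE !eqxx (ord1 k) mulr1.
by move=> c /negPf ci; rewrite !mxE ci mulr0.
Qed.

Lemma rank_ctrb_kry n (A : 'M[F]_n) (b : 'cV[F]_n) :
  \rank (ctrbF A b) = \rank (kry A b).
Proof.
apply/eqP; rewrite eqn_leq; apply/andP; split.
  by rewrite -{1}kry_ctrb mxrankM_maxl.
by rewrite -ctrb_kry mxrankM_maxl.
Qed.

Lemma eig_exp n (A : 'M[F]_n) (w : 'rV_n) lam i :
  w *m A = lam *: w -> w *m A ^+ i = lam ^+ i *: w.
Proof.
move=> H; elim: i => [|i IH]; first by rewrite expr0 scale1r mulmx1.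
by rewrite exprSr -mulmxE mulmxA IH -scalemxAl H scalerA exprSr.
Qed.

Lemma pbh_easy n m (A : 'M[F]_n) (B : 'M[F]_(n, m)) (w : 'rV_n) lam :
  w *m A = lam *: w -> \rank (ctrbF A B) = n -> w != 0 -> w *m B != 0.
Proof.
move=> Hw Hr; apply: contra => /eqP wB0.
have H0 : w *m ctrbF A B = 0 *m ctrbF A B.
  rewrite mul0mx /ctrbF mul_mxrow -(mxrow0 (q_ := fun=> m)).
  by apply: eq_mxrow => i; rewrite mulmxA (eig_exp _ Hw) -scalemxAl wB0 scaler0.
have rf : row_free (ctrbF A B) by rewrite /row_free Hr.
by rewrite (row_free_inj rf H0).
Qed.

Lemma kry_full n (A : 'M[F]_n) (b : 'cV[F]_n) (W : 'M[F]_n) (lam : 'I_n -> F) :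
  (forall j, row j W *m A = lam j *: row j W) -> injective lam ->
  (forall j, (row j W *m b) 0 0 != 0) -> \rank (kry A b) = n.
Proof.
move=> HW Hinj Hb; apply/eqP; rewrite eqn_leq rank_leq_row /=.
apply: leq_trans (mxrankM_maxr W _).
have -> : W *m kry A b = diag_mx (\row_j (row j W *m b) 0 0)
     *m (Vandermonde n (\row_j lam j))^T.
  rewrite mul_diag_mx; apply/matrixP => j i; rewrite !mxE.
  transitivity ((row j W *m (A ^+ i *m b)) 0 0).
    by rewrite [RHS]mxE; apply: eq_bigr => k _; rewrite !mxE.
  by rewrite mulmxA (eig_exp _ (HW j)) -scalemxAl !mxE mulrC.
rewrite mxrank_unit // unitmxE unitfE det_mulmx det_tr det_Vandermonde det_diag.
rewrite mulf_neq0 //; apply/prodf_neq0 => i _.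
  rewrite mxE; exact: Hb.
apply/prodf_neq0 => j ij; rewrite !mxE subr_eq0; apply/eqP => /Hinj ji.
by move: ij; rewrite ji ltnn.
Qed.
End Gen.

Lemma card_le_inj (T U : finType) (A : {set T}) (B : {set U}) (f : T -> U) :
  {in A &, injective f} -> (forall x, x \in A -> f x \in B) -> (#|A| <= #|B|)%N.
Proof.
move=> inj fAB; rewrite -(card_in_imset inj); apply: subset_leq_card.
by apply/subsetP => y /imsetP [x xA ->]; apply: fAB.
Qed.

Lemma map_mxXn (F K : fieldType) (f : {rmorphism F -> K}) n (A : 'M[F]_n) i :
  map_mx f (A ^+ i) = (map_mx f A) ^+ i.
Proof.
elim: i => [|i IH]; first by rewrite !expr0 map_mx1.
by rewrite !exprS -!mulmxE map_mxM IH.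
Qed.

Lemma map_ctrb (F K : fieldType) (f : {rmorphism F -> K}) n m (A : 'M[F]_n)
   (B : 'M[F]_(n, m)) :
  ctrbF (map_mx f A) (map_mx f B) = map_mx f (ctrbF A B).
Proof.
apply/matrixP => r s; rewrite /ctrbF !mxE rmorph_sum; apply: eq_bigr => j _.
by rewrite rmorphM -map_mxXn !mxE.
Qed.

Lemma exists_nonroot (C : numDomainType) (P : {poly C}) :
  P != 0 -> exists m : nat, ~~ root P m%:R.
Proof.
move=> P0; set rs := [seq i%:R | i <- iota 0 (size P)] : seq C.
case: (boolP (all (root P) rs)) => [allr | /allPn [x /mapP [i _ ->] nr]].
  have u : uniq rs.
    rewrite map_inj_uniq ?iota_uniq // => a c /eqP; rewrite eqr_nat => /eqP //.
  by have := max_poly_roots P0 allr u; rewrite size_map size_iota ltnn.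
by exists i.
Qed.

Lemma uniq_of_count (T : eqType) (s : seq T) :
  (forall x, count_mem x s <= 1)%N -> uniq s.
Proof.
move=> H; apply: count_mem_uniq => x; move: (H x).
have := has_count (pred1 x) s; rewrite has_pred1.
by case: (count _ _) => [|[|]] //= ->.
Qed.

Theorem theorem3 (R : realType) (n p k : nat) (A : 'M[R]_n) :
  distinct_eigenvalues A -> (1 <= p)%N ->
  ((exists Bv : 'cV[R]_n, sparse k Bv /\ controllable A Bv) <->
   (exists Bf : 'M[R]_(n, p), sparse k Bf /\ controllable A Bf)).
Proof.
move=> Hd; case: p => [//|p] _.
have ctrbE : forall m (B : 'M[R]_(n, m)), ctrb_mx A B = ctrbF A B
  by move=> m B.
split.
- case=> Bv [Hs Hc]; exists (Bv *m delta_mx 0 0); split.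
  + have E : forall i j, (Bv *m (delta_mx 0 0 : 'M[R]_(1, p.+1))) i j
                         = Bv i 0 * (j == 0)%:R.
      by move=> i j; rewrite !mxE big_ord1 !mxE eqxx.
    rewrite /sparse /nnz; apply: leq_trans Hs.
    apply: (card_le_inj (f := fun ij : 'I_n * 'I_p.+1 => (ij.1, (0 : 'I_1)))).
      move=> [i j] [i' j']; rewrite !inE /= !E => H1 H2 [ii'].
      move: H1 H2; case: (eqVneq j 0) => [-> _|jn]; last by rewrite mulr0 eqxx.
      case: (eqVneq j' 0) => [-> _|jn]; last by rewrite mulr0 eqxx.
      by rewrite ii'.
    move=> [i j]; rewrite !inE /= E.
    case: (eqVneq j 0) => [_|jn]; last by rewrite mulr0 eqxx.
    by rewrite mulr1.
  + rewrite /controllable ctrbE; apply/eqP; rewrite eqn_leq rank_leq_row /=.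
    have H : ctrbF A (Bv *m delta_mx 0 0) *m
             \mxcol_(i < n) (delta_mx 0 i : 'M[R]_(p.+1, n)) = kry A Bv.
      rewrite -ctrb_kry /ctrbF !mul_mxrow_mxcol; apply: eq_bigr => i _.
      by rewrite mulmxA -(mulmxA _ (delta_mx _ _)) mul_delta_mx.
    rewrite -{1}Hc ctrbE rank_ctrb_kry -H; exact: mxrankM_maxl.
- case=> Bf [Hs Hc].
  pose fC := real_complex R.
  have Hcc : \rank (ctrbF (map_mx fC A) (map_mx fC Bf)) = n.
    by rewrite map_ctrb mxrank_map.
  pose Ac := map_mx fC A.
  have [rs Hrs] := closed_field_poly_normal (char_poly Ac).
  rewrite (monicP (char_poly_monic _)) scale1r in Hrs.
  have Hsz : size rs = n.
    by have := size_char_poly Ac; rewrite Hrs size_prod_XsubC => -[].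
  have Hu : uniq rs.
    apply: uniq_of_count => z; rewrite -mu_prod_XsubC -Hrs; exact: Hd z.
  pose lam (j : 'I_n) := rs`_j.
  have lam_inj : injective lam.
    move=> i j /eqP; rewrite /lam nth_uniq ?Hsz // => /eqP ij; exact: val_inj.
  have Heig : forall j, exists w : 'rV_n, w *m Ac = lam j *: w /\ w != 0.
    move=> j; have : eigenvalue Ac (lam j).
      by rewrite eigenvalue_root_char Hrs root_prod_XsubC mem_nth ?Hsz.
    by move=> /eigenvalueP [w ? ?]; exists w.
  have [w Hw] := fin_all_exists Heig.
  pose c j := w j *m map_mx fC Bf.
  have cnz : forall j, c j != 0.
    by move=> j; apply: (pbh_easy (Hw j).1 Hcc (Hw j).2).
  pose f j := \poly_(l < p.+1) (c j 0 (inord l)).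
  have fnz : forall j, f j != 0.
    move=> j; apply: contra (cnz j) => /eqP f0; apply/eqP/matrixP => a l.
    have := congr1 (fun q : {poly R[i]} => q`_l) f0; rewrite /f coef_poly ltn_ord coef0 inord_val => E.
    by rewrite (ord1 a) E mxE.
  have Pnz : \prod_j f j != 0 by apply/prodf_neq0 => j _; exact: fnz j.
  have [t Ht] := exists_nonroot Pnz.
  pose u : 'cV[R]_p.+1 := \col_l ((t%:R : R) ^+ l).
  exists (Bf *m u); split.
  + rewrite /sparse /nnz; apply: leq_trans Hs.
    apply: (card_le_inj (f := fun ij : 'I_n * 'I_1 =>
                (ij.1, odflt ord0 [pick l | Bf ij.1 l != 0]))).
      move=> [i a] [i' a'] _ _ /= [ii' _].
      by rewrite ii' (ord1 a) (ord1 a').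
    move=> [i a]; rewrite !inE /= => H.
    case: pickP => [l Hl //|H0]; exfalso; move: H.
    rewrite mxE big1 ?eqxx // => l _.
    by have := H0 l => /= /negbFE /eqP ->; rewrite mul0r.
  + rewrite /controllable ctrbE -(mxrank_map fC) -map_ctrb map_mxM rank_ctrb_kry.
    apply: (@kry_full _ _ _ _ (\matrix_j w j) lam).
    * by move=> j; rewrite rowK; exact: (Hw j).1.
    * exact: lam_inj.
    * move=> j; rewrite rowK mulmxA.
      have : ~~ root (f j) t%:R.
        move: Ht; rewrite /root horner_prod; apply: contra => /eqP fj0.
        by rewrite (bigD1 j) //= fj0 mul0r.
      rewrite /root; apply: contra => /eqP E; apply/eqP; rewrite -E.
      rewrite horner_poly mxE; apply: eq_bigr => l _.
      by rewrite inord_val !mxE rmorphXn rmorph_nat.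
Qed.
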